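(* For every regular expression $R$ and every database $D$, $\llbracket R\rrbracket_{BT}(D)=\pi_D\circ\mathrm{bindingtrail}\circ\mathrm{match}_{\mathcal{A}}(D)$ (as bags), where $\mathcal{A}=Gl(R)$, $\mathrm{match}_{\mathcal{A}}(D)$ is the bag of all runs of $D\times\mathcal{A}$, and $\mathrm{bindingtrail}$ is the filter keeping exactly the runs $(n_0,q_0)(e_0,\delta_0)(n_1,q_1)\cdots(e_{k-1},\delta_{k-1})(n_k,q_k)$ in which the pairs $(e_i,q_{i+1})$, $0\le i<k$, are pairwise distinct.
   Context: A database is $D=(\Sigma,V,E,\mathrm{src},\mathrm{tgt},\mathrm{lbl})$ with finite alphabet $\Sigma$, finite vertex set $V$, finite edge set $E$, $\mathrm{src},\mathrm{tgt}:E\to V$, $\mathrm{lbl}:E\to2^\Sigma$; walks are alternating sequences $(n_0,e_0,\dots,e_{k-1},n_k)$ with $\mathrm{src}(e_i)=n_i$, $\mathrm{tgt}(e_i)=n_{i+1}$, and $\mathrm{lbl}(w)=\{u_0\cdots u_{k-1}:u_i\in\mathrm{lbl}(e_i)\}$. Regular expressions over $\Sigma$: $R::=\varepsilon\mid a\mid R^*\mid R\cdot R\mid R+R$ ($a\in\Sigma$). A linearisation $R'$ of $R$ replaces each atom occurrence by a distinct fresh symbol (a position) from an alphabet $\Gamma$; for $\alpha\in\Gamma$, $\overline{\alpha}\in\Sigma$ is the letter it replaced, extended to words. The Glushkov automaton $Gl(R)$ is the trim part of $(\Sigma,\{i\}\uplus\Gamma,\Delta,\{i\},F)$ with $\Delta=\{(\alpha,\overline\beta,\beta):\exists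 u,v\in\Gamma^*,\ u\alpha\beta v\in L(R')\}\cup\{(i,\overline\alpha,\alpha):\exists u\in\Gamma^*,\ \alpha u\in L(R')\}$ and $F=\{\alpha:\exists u,\ u\alpha\in L(R')\}\cup(\{i\}$ if $\varepsilon\in L(R'))$. For an automaton $\mathcal{A}=(\Sigma,Q,\Delta,I,F)$ the run database $D\times\mathcal{A}$ has vertices $V\times Q$ and edges $(e,\delta)$ with $e\in E$, $\delta=(q,a,q')\in\Delta$, $a\in\mathrm{lbl}(e)$, from $(\mathrm{src}(e),q)$ to $(\mathrm{tgt}(e),q')$; runs are its walks from $V\times I$ to $V\times F$; $\pi_D$ projects to $D$. A binding trail of $D$ matching $R$ is a sequence $(e_1,\alpha_1)\cdots(e_n,\alpha_n)\in(E\times\Gamma)^*$ such that $e_1\cdots e_n$ forms a walk of $D$, $\overline{\alpha_1\cdots\alpha_n}\in\mathrm{lbl}(e_1\cdots e_n)$, $\alpha_1\cdots\alpha_n\in L(R')$, and the pairs $(e_i,\alpha_i)$ are pairwise distinct. The binding-trail semantics $\llbracket R\rrbracket_{BT}(D)$ is the bag of projections $\pi_D$ (onto the walk $e_1\cdots e_n$) of all binding trails of $D$ matching $R$. *)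

(* Defs.v *)
From Stdlib Require Import List.
From mathcomp Require Import all_boot.


Unset Printing Implicit Defensive.

Inductive regex (A : Type) : Type :=
| REps : regex A
| RAtom : A -> regex A
| RStar : regex A -> regex A
| RCat : regex A -> regex A -> regex A
| RPlus : regex A -> regex A -> regex A.
Arguments REps {A}. Arguments RAtom {A}. Arguments RStar {A}. Arguments RCat {A}. Arguments RPlus {A}.

Inductive lang {A : Type} : regex A -> seq A -> Prop :=
| L_eps : lang REps [::]
| L_atom a : lang (RAtom a) [:: a]
| L_star0 r : lang (RStar r) [::]
| L_starS r u v : lang r u -> lang (RStar r) v -> lang (RStar r) (u ++ v)
| L_cat r s u v : lang r u -> lang s v -> lang (RCat r s) (u ++ v)
| L_plusl r s u : lang r u -> lang (RPlus r s) u
| L_plusr r s u : lang s u -> lang (RPlus r s) u.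

(* ---------- Linearisation ----------
   Positions are pairs (k, a): k is the (fresh, distinct) index of the atom
   occurrence, a the letter it replaced; hence  bar (k, a) = a. *)
Definition pos (S : Type) := (nat * S)%type.
Definition bar {S : Type} (p : pos S) : S := p.2.

Fixpoint lin {S : Type} (r : regex S) (k : nat) : regex (pos S) * nat :=
  match r with
  | REps => (REps, k)
  | RAtom a => (RAtom (k, a), k.+1)
  | RStar r1 => let (r1', k1) := lin r1 k in (RStar r1', k1)
  | RCat r1 r2 =>
      let (r1', k1) := lin r1 k in let (r2', k2) := lin r2 k1 in (RCat r1' r2', k2)
  | RPlus r1 r2 =>
      let (r1', k1) := lin r1 k in let (r2', k2) := lin r2 k1 in (RPlus r1' r2', k2)
  end.

Definition linearise {S : Type} (r : regex S) : regex (pos S) := (lin r 0).1.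

Record automaton (S : Type) := Automaton {
  aQ : Type;
  aDelta : aQ -> S -> aQ -> Prop;
  aInit : aQ -> Prop;
  aFinal : aQ -> Prop }.
Arguments aQ {S}. Arguments aDelta {S a}. Arguments aInit {S a}. Arguments aFinal {S a}.

(* the untrimmed Glushkov automaton: states {i} + Gamma, with i = None *)
Definition glDelta {S : Type} (R : regex S) (q : option (pos S)) (a : S)
    (q' : option (pos S)) : Prop :=
  match q, q' with
  | Some al, Some be => a = bar be /\
      exists u v, lang (linearise R) (u ++ al :: be :: v)
  | None, Some al => a = bar al /\ exists u, lang (linearise R) (al :: u)
  | _, None => False
  end.
Definition glInit {S : Type} (q : option (pos S)) : Prop := q = None.
Definition glFinal {S : Type} (R : regex S) (q : option (pos S)) : Prop :=
  match q with
  | Some al => exists u, lang (linearise R) (rcons u al)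
  | None => lang (linearise R) [::]
  end.

Inductive reach {Q S : Type} (d : Q -> S -> Q -> Prop) : Q -> Q -> Prop :=
| reach_refl q : reach d q q
| reach_step q a q' q'' : d q a q' -> reach d q' q'' -> reach d q q''.

Definition gl_useful {S : Type} (R : regex S) (q : option (pos S)) : Prop :=
  (exists q0, glInit q0 /\ reach (glDelta R) q0 q) /\
  (exists qf, glFinal R qf /\ reach (glDelta R) q qf).

Definition glQ {S : Type} (R : regex S) := {q : option (pos S) | gl_useful R q}.

Definition Gl {S : Type} (R : regex S) : automaton S :=
  @Automaton S (glQ R)
    (fun q a q' => glDelta R (proj1_sig q) a (proj1_sig q'))
    (fun q => glInit (proj1_sig q))
    (fun q => glFinal R (proj1_sig q)).

Record database (S : finType) := Database {
  dV : finType;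
  dE : finType;
  src : dE -> dV;
  tgt : dE -> dV;
  lbl : dE -> {set S} }.
Arguments dV {S}. Arguments dE {S}. Arguments src {S d}. Arguments tgt {S d}. Arguments lbl {S d}.

(* a walk (n0, e0, n1, ..., n_k) is represented by its start vertex and its
   edge sequence (the intermediate vertices are determined by tgt) *)
Definition walk {S : finType} (D : database S) := (dV D * seq (dE D))%type.

Fixpoint is_walk_from {S : finType} (D : database S) (n : dV D) (es : seq (dE D))
  : Prop :=
  match es with
  | [::] => True
  | e :: es' => src e = n /\ is_walk_from D (tgt e) es'
  end.

Definition is_walk {S : finType} (D : database S) (w : walk D) : Prop :=
  is_walk_from D w.1 w.2.

Definition in_lbl_walk {S : finType} (D : database S) (es : seq (dE D)) (u : seq S)
  : Prop := size es = size u /\ forall i, i < size es ->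
     forall e a, nth_error es i = Some e -> nth_error u i = Some a -> a \in lbl e.

Definition btrail {S : finType} (D : database S) :=
  (dV D * seq (dE D * pos S))%type.

Definition is_binding_trail {S : finType} (D : database S) (R : regex S)
    (t : btrail D) : Prop :=
  is_walk D (t.1, map fst t.2) /\
  in_lbl_walk D (map fst t.2) (map bar (map snd t.2)) /\
  lang (linearise R) (map snd t.2) /\
  NoDup t.2.

Definition pi_bt {S : finType} (D : database S) (t : btrail D) : walk D :=
  (t.1, map fst t.2).

Definition run {S : finType} (D : database S) (A : automaton S) :=
  ((dV D * aQ A) * seq (dE D * (aQ A * S * aQ A)))%type.

Fixpoint is_prod_walk_from {S : finType} (D : database S) (A : automaton S)
    (n : dV D) (q : aQ A) (es : seq (dE D * (aQ A * S * aQ A))) : Prop :=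
  match es with
  | [::] => True
  | (e, (p, a, p')) :: es' =>
      aDelta p a p' /\ a \in lbl e /\ src e = n /\ p = q /\
      is_prod_walk_from D A (tgt e) p' es'
  end.

Definition last_state {S : finType} (D : database S) (A : automaton S)
    (q0 : aQ A) (es : seq (dE D * (aQ A * S * aQ A))) : aQ A :=
  last q0 (map (fun x => x.2.2) es).

Definition is_run {S : finType} (D : database S) (A : automaton S) (r : run D A)
  : Prop :=
  aInit r.1.2 /\ is_prod_walk_from D A r.1.1 r.1.2 r.2 /\
  aFinal (last_state D A r.1.2 r.2).

Definition bindingtrail_filter {S : finType} (D : database S) (A : automaton S)
    (r : run D A) : Prop :=
  NoDup (map (fun x => (x.1, x.2.2)) r.2).

Definition pi_run {S : finType} (D : database S) (A : automaton S) (r : run D A)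
  : walk D := (r.1.1, map fst r.2).

(* ---------- Bags ----------
   A bag of elements of W is given by an index type I and a map I -> W; two
   bags are equal when every w has equinumerous fibres (same multiplicity). *)
Definition bag_eq {W I J : Type} (f : I -> W) (g : J -> W) : Prop :=
  forall w : W, exists (h : {i : I | f i = w} -> {j : J | g j = w})
                       (k : {j : J | g j = w} -> {i : I | f i = w}),
    (forall x, k (h x) = x) /\ (forall y, h (k y) = y).

Definition BT_sem {S : finType} (D : database S) (R : regex S) :
  {t : btrail D | is_binding_trail D R t} -> walk D :=
  fun t => pi_bt D (proj1_sig t).

Definition run_sem {S : finType} (D : database S) (A : automaton S) :
  {r : run D A | is_run D A r /\ bindingtrail_filter D A r} -> walk D :=
  fun r => pi_run D A (proj1_sig r).

(* Main.v *)
Require Import Defs.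
From mathcomp Require Import all_boot.
From Stdlib Require Import ProofIrrelevance ClassicalEpsilon.
Set Implicit Arguments.
Unset Strict Implicit.
Section Local.
Variable P : eqType.
Implicit Types (r s : regex P) (u v w : seq P) (x y z : P).

Fixpoint atoms (r : regex P) : seq P :=
  match r with
  | REps => [::]
  | RAtom a => [:: a]
  | RStar r1 => atoms r1
  | RCat r1 r2 => atoms r1 ++ atoms r2
  | RPlus r1 r2 => atoms r1 ++ atoms r2
  end.

Definition firstL r x := exists u, lang r (x :: u).
Definition lastL r x := exists u, lang r (rcons u x).
Definition followL r x y := exists u v, lang r (u ++ x :: y :: v).

Fixpoint chainP (Rl : P -> P -> Prop) x w : Prop :=
  match w with [::] => True | y :: w' => Rl x y /\ chainP Rl y w' end.

Lemma chainP_cat Rl x a b : chainP Rl x (a ++ b) <-> chainP Rl x a /\ chainP Rl (last x a) b.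
Proof. elim: a x => [|y a IH] x /=; first by tauto. rewrite IH; tauto. Qed.

Lemma lang_atoms r w : lang r w -> forall x, x \in w -> x \in atoms r.
Proof.
move=> H; induction H => /= x.
- by [].
- by [].
- by [].
- by rewrite mem_cat => /orP [/IHlang1|/IHlang2].
- by rewrite !mem_cat => /orP [/IHlang1 ->|/IHlang2 ->]; rewrite ?orbT.
- by move/IHlang; rewrite mem_cat => ->.
- by move/IHlang; rewrite mem_cat => ->; rewrite orbT.
Qed.

Lemma firstL_atoms r x : firstL r x -> x \in atoms r.
Proof. by case=> u /lang_atoms; apply; rewrite inE eqxx. Qed.
Lemma lastL_atoms r x : lastL r x -> x \in atoms r.
Proof. by case=> u /lang_atoms; apply; rewrite mem_rcons inE eqxx. Qed.
Lemma followL_atoms r x y : followL r x y -> x \in atoms r /\ y \in atoms r.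
Proof.
case=> u [v] /lang_atoms H; split; apply: H; by rewrite mem_cat !inE eqxx ?orbT.
Qed.

Lemma chain_last_atoms r x w : chainP (followL r) x w -> x \in atoms r -> last x w \in atoms r.
Proof.
elim: w x => [|y w IH] x //= [/followL_atoms [_ Hy] Hc] _; exact: IH.
Qed.

Lemma split3 u x y v a b : u ++ x :: y :: v = a ++ b ->
  (exists a', a = u ++ x :: y :: a' /\ v = a' ++ b) \/
  (a = rcons u x /\ b = y :: v) \/
  (exists b', b = b' ++ x :: y :: v /\ u = a ++ b').
Proof.
elim: a u => [|z a IH] u /=.
  by move=> <-; right; right; exists u.
case: u => [|z0 u] /=.
  case=> <-; case: a {IH} => [|z' a] /=.
    by move=> <-; right; left.
  by case=> <- ->; left; exists a.
case=> <- /IH [[a' [-> ->]]|[[-> ->]|[b' [-> ->]]]].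
- by left; exists a'.
- by right; left.
- by right; right; exists b'.
Qed.

Lemma star_ind' r (Q : seq P -> Prop) : Q [::] ->
  (forall u v, lang r u -> lang (RStar r) v -> Q v -> Q (u ++ v)) ->
  forall w, lang (RStar r) w -> Q w.
Proof.
move=> H0 HS w H. remember (RStar r) as e eqn:He.
induction H; try discriminate.
- exact H0.
- have E : r0 = r by case: He.
  subst r0. apply: (HS) => //; exact: (IHlang2 erefl HS).
Qed.

Lemma star_first r x u : lang (RStar r) (x :: u) -> firstL r x.
Proof.
move=> H.
suff: forall w, lang (RStar r) w -> forall x u, w = x :: u -> firstL r x by move/(_ _ H x u erefl).
apply: star_ind' => // u0 v0 Hu Hv IH x' u'.
case: u0 Hu => [|z u0] Hu /=; first exact: IH.
by case=> <- _; exists u0.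
Qed.

Lemma star_last r x u : lang (RStar r) (rcons u x) -> lastL r x.
Proof.
move=> H.
suff: forall w, lang (RStar r) w -> forall x u, w = rcons u x -> lastL r x by move/(_ _ H x u erefl).
apply: star_ind' => [x' u'|u0 v0 Hu Hv IH x' u']; first by case: u'.
case/lastP: v0 Hv IH => [|v' y] Hv IH.
  by rewrite cats0 => E; exists u'; rewrite -E.
rewrite -rcons_cat => /eqP; rewrite eqseq_rcons => /andP [_ /eqP <-].
exact: (IH y v').
Qed.

Lemma star_follow r u x y v : lang (RStar r) (u ++ x :: y :: v) ->
  followL r x y \/ (lastL r x /\ firstL r y).
Proof.
move=> H.
suff: forall w, lang (RStar r) w -> forall u x y v, w = u ++ x :: y :: v ->
   followL r x y \/ (lastL r x /\ firstL r y) by move/(_ _ H u x y v erefl).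
apply: star_ind' => [u' x' y' v'|u0 v0 Hu Hv IH u' x' y' v']; first by case: u'.
move/esym/split3 => [[a' [E _]]|[[E1 E2]|[b' [E _]]]].
- by left; exists u', a'; rewrite -E.
- right; split; first by exists u'; rewrite -E1.
  by subst; apply: star_first Hv.
- by apply: (IH b'); rewrite E.
Qed.

Lemma cat_inv r s w : lang (RCat r s) w -> exists u v, w = u ++ v /\ lang r u /\ lang s v.
Proof. by move=> H; inversion H; subst; exists u, v. Qed.
Lemma plus_inv r s w : lang (RPlus r s) w -> lang r w \/ lang s w.
Proof. by move=> H; inversion H; subst; [left|right]. Qed.
Lemma atom_inv a w : lang (RAtom a) w -> w = [:: a].
Proof. by move=> H; inversion H. Qed.
Lemma eps_inv w : lang (@REps P) w -> w = [::].
Proof. by move=> H; inversion H. Qed.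

Lemma cat_follow r s x y : followL (RCat r s) x y ->
  followL r x y \/ followL s x y \/ (lastL r x /\ firstL s y).
Proof.
case=> u [v] /cat_inv [u0 [v0 [E [Hu Hv]]]].
case/split3: E => [[a' [E _]]|[[E1 E2]|[b' [E _]]]].
- by left; exists u, a'; rewrite -E.
- by right; right; split; [exists u; rewrite -E1|exists v; rewrite -E2].
- by right; left; exists b', v; rewrite -E.
Qed.

Lemma cat_first r s x : firstL (RCat r s) x -> firstL r x \/ (lang r [::] /\ firstL s x).
Proof.
case=> u /cat_inv [[|z u0] [v0 [E [Hu Hv]]]] /=.
  by right; split => //; exists u; rewrite E.
by left; case: E => E1 _; subst; exists u0.
Qed.

Lemma cat_last r s x : lastL (RCat r s) x -> lastL s x \/ (lastL r x /\ lang s [::]).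
Proof.
case=> u /cat_inv [u0 [v0 [E [Hu Hv]]]].
case/lastP: v0 E Hv => [|v' y] E Hv.
  by right; split => //; exists u; rewrite E cats0.
move: E; rewrite -rcons_cat => /eqP; rewrite eqseq_rcons => /andP [_ /eqP E]; subst.
by left; exists v'.
Qed.

Lemma plus_follow r s x y : followL (RPlus r s) x y -> followL r x y \/ followL s x y.
Proof. by case=> u [v] /plus_inv [H|H]; [left|right]; exists u, v. Qed.
Lemma plus_first r s x : firstL (RPlus r s) x -> firstL r x \/ firstL s x.
Proof. by case=> u /plus_inv [H|H]; [left|right]; exists u. Qed.
Lemma plus_last r s x : lastL (RPlus r s) x -> lastL r x \/ lastL s x.
Proof. by case=> u /plus_inv [H|H]; [left|right]; exists u. Qed.

Section CatPlus.
Variables r s : regex P.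
Hypothesis Hd : forall z, z \in atoms r -> z \in atoms s -> False.

Lemma stay_s x w : chainP (followL (RCat r s)) x w -> x \in atoms s -> chainP (followL s) x w.
Proof.
elim: w x => [|y w IH] x //= [Hf Hc] Hx.
case: (cat_follow Hf) => [/followL_atoms [H _]|[H|[/lastL_atoms H _]]].
- by case: (Hd H Hx).
- by split => //; apply: IH => //; case: (followL_atoms H).
- by case: (Hd H Hx).
Qed.

Lemma split_r x w : chainP (followL (RCat r s)) x w -> x \in atoms r ->
  exists w1 w2, w = w1 ++ w2 /\ chainP (followL r) x w1 /\
   (w2 = [::] \/ exists y w2', w2 = y :: w2' /\ lastL r (last x w1) /\ firstL s y /\
        chainP (followL s) y w2').
Proof.
elim: w x => [|y w IH] x /=.
  by move=> _ _; exists [::], [::]; split => //; split => //; left.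
move=> [Hf Hc] Hx.
case: (cat_follow Hf) => [H|[/followL_atoms [H _]|[Hl Hfs]]].
- have [_ Hy] := followL_atoms H.
  have [w1 [w2 [E [Hc1 Hw2]]]] := IH y Hc Hy.
  by exists (y :: w1), w2; rewrite E; split => //.
- by case: (Hd Hx H).
- exists [::], (y :: w); split => //; split => //; right; exists y, w.
  split => //; split => //; split => //.
  by apply: stay_s => //; apply: firstL_atoms.
Qed.

Lemma plus_chain_r x w : chainP (followL (RPlus r s)) x w -> x \in atoms r -> chainP (followL r) x w.
Proof.
elim: w x => [|y w IH] x //= [Hf Hc] Hx.
case: (plus_follow Hf) => H.
- by split => //; apply: IH => //; case: (followL_atoms H).
- by case: (followL_atoms H) => /(Hd Hx).
Qed.

Lemma plus_chain_s x w : chainP (followL (RPlus r s)) x w -> x \in atoms s -> chainP (followL s) x w.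
Proof.
elim: w x => [|y w IH] x //= [Hf Hc] Hx.
case: (plus_follow Hf) => H.
- by case: (followL_atoms H) => /Hd /(_ Hx).
- by split => //; apply: IH => //; case: (followL_atoms H).
Qed.
End CatPlus.

Lemma disj_of_uniq r s : uniq (atoms r ++ atoms s) ->
  forall z, z \in atoms r -> z \in atoms s -> False.
Proof.
rewrite cat_uniq => /and3P [_ /hasPn H _] z Hr Hs.
by move: (H z Hs); rewrite Hr.
Qed.

Theorem local_lang r : uniq (atoms r) -> forall x w, firstL r x -> lastL r (last x w) ->
  chainP (followL r) x w -> lang r (x :: w).
Proof.
elim: r => [|a|r IH|r IHr s IHs|r IHr s IHs] /= Hu x w.
- by case=> u /eps_inv.
- case=> u /atom_inv [-> _] _.
  case: w => [|y w] /=; first by move=> _; constructor.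
  by case=> [[u0 [v0 /atom_inv]]]; case: u0 => [|? []].
- move=> [u0 /star_first Hf] Hl Hc.
  have Hl' : lastL r (last x w) by case: Hl => u /star_last.
  suff: forall w b0 b, firstL r b0 -> chainP (followL r) b0 b ->
     chainP (fun y z => followL r y z \/ (lastL r y /\ firstL r z)) (last b0 b) w ->
     lastL r (last (last b0 b) w) -> lang (RStar r) (b0 :: b ++ w).
    move/(_ w x [::] Hf I); apply => //.
    elim: w x Hc {Hf Hl Hl'} => [|y w IHw] x //= [[u [v]] /star_follow H Hc].
    by split => //; apply: IHw.
  elim=> [|y w1 IHw] b0 b Hb0 Hb /=.
    move=> _ Hlb; rewrite cats0.
    rewrite -[b0 :: b]cats0; constructor; last by constructor.
    exact: IH.
  case=> [[Hfo|[Hlr Hfr]] Hc1] Hl1.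
  - have := IHw b0 (rcons b y) Hb0.
    rewrite cat_rcons last_rcons; apply => //.
    by rewrite -cats1; apply/chainP_cat; split => //=.
  - have -> : b0 :: b ++ y :: w1 = (b0 :: b) ++ (y :: w1) by [].
    constructor; first exact: IH.
    by apply: (IHw y [::]).
- have Hd : forall z, z \in atoms r -> z \in atoms s -> False := @disj_of_uniq r s Hu.
  move: Hu; rewrite cat_uniq => /and3P [Hur _ Hus].
  move=> Hf Hl Hc.
  have : x \in atoms r ++ atoms s := firstL_atoms Hf.
  rewrite mem_cat => /orP [Hx|Hx].
  + have [w1 [w2 [E [Hc1 Hw2]]]] := split_r Hd Hc Hx.
    have Hfr : firstL r x.
      by case: (cat_first Hf) => [//|[_ /firstL_atoms /(@Hd _ Hx)]].
    case: Hw2 => [E2|[y [w2' [E2 [Hlr [Hfs Hcs]]]]]].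
    * subst; rewrite cats0 in Hl *.
      case: (cat_last Hl) => [/lastL_atoms Hs|[Hlr Hn]].
        by case: (@Hd _ (chain_last_atoms Hc1 Hx) Hs).
      rewrite -[x :: w1]cats0; constructor => //; exact: IHr.
    * subst; have -> : x :: w1 ++ y :: w2' = (x :: w1) ++ (y :: w2') by [].
      constructor; first exact: IHr.
      apply: IHs => //.
      rewrite last_cat /= in Hl.
      case: (cat_last Hl) => [//|[/lastL_atoms Hr _]].
      by case: (@Hd _ Hr (chain_last_atoms Hcs (firstL_atoms Hfs))).
  + have Hcs := stay_s Hd Hc Hx.
    case: (cat_first Hf) => [/firstL_atoms /(@Hd _) /(_ Hx) //|[Hn Hfs]].
    have -> : x :: w = [::] ++ (x :: w) by [].
    constructor => //; apply: IHs => //.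
    case: (cat_last Hl) => [//|[/lastL_atoms Hr _]].
    by case: (@Hd _ Hr (chain_last_atoms Hcs Hx)).
- have Hd : forall z, z \in atoms r -> z \in atoms s -> False := @disj_of_uniq r s Hu.
  move: Hu; rewrite cat_uniq => /and3P [Hur _ Hus].
  move=> Hf Hl Hc.
  have : x \in atoms r ++ atoms s := firstL_atoms Hf.
  rewrite mem_cat => /orP [Hx|Hx].
  + have Hcr := plus_chain_r Hd Hc Hx.
    apply: L_plusl; apply: IHr => //.
    * by case: (plus_first Hf) => // /firstL_atoms /(@Hd _ Hx).
    * case: (plus_last Hl) => // /lastL_atoms Hs.
      by case: (@Hd _ (chain_last_atoms Hcr Hx) Hs).
  + have Hcs := plus_chain_s Hd Hc Hx.
    apply: L_plusr; apply: IHs => //.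
    * by case: (plus_first Hf) => // /firstL_atoms Hr; case: (@Hd _ Hr Hx).
    * case: (plus_last Hl) => // /lastL_atoms Hr.
      by case: (@Hd _ Hr (chain_last_atoms Hcs Hx)).
Qed.

End Local.
Lemma lin_spec (S : eqType) (r : regex S) k :
  k <= (lin r k).2 /\ uniq (atoms (lin r k).1) /\
  all (fun p : nat * S => (k <= p.1) && (p.1 < (lin r k).2)) (atoms (lin r k).1).
Proof.
elim: r k => [|a|r IH|r IHr s IHs|r IHr s IHs] k /=.
- by [].
- by rewrite leqnSn /= leqnn ltnSn.
- by case E: (lin r k) => [r' k1]; have := IH k; rewrite E.
- case E1: (lin r k) => [r1 k1]; case E2: (lin s k1) => [r2 k2] /=.
  have := IHr k; rewrite E1 /= => [[H1 [U1 A1]]].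
  have := IHs k1; rewrite E2 /= => [[H2 [U2 A2]]].
  split; first exact: leq_trans H2.
  split.
    rewrite cat_uniq U1 U2 andbT /=; apply/hasPn => p /(allP A2) /andP [Hp _].
    apply/negP => /(allP A1) /andP [_ Hp']. by move: (leq_trans Hp' Hp); rewrite ltnn.
  rewrite all_cat; apply/andP; split.
    apply/allP => p /(allP A1) /andP [-> Hp] /=; exact: leq_trans Hp H2.
  apply/allP => p /(allP A2) /andP [Hp ->]; rewrite andbT; exact: leq_trans Hp.
- case E1: (lin r k) => [r1 k1]; case E2: (lin s k1) => [r2 k2] /=.
  have := IHr k; rewrite E1 /= => [[H1 [U1 A1]]].
  have := IHs k1; rewrite E2 /= => [[H2 [U2 A2]]].
  split; first exact: leq_trans H2.
  split.
    rewrite cat_uniq U1 U2 andbT /=; apply/hasPn => p /(allP A2) /andP [Hp _].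
    apply/negP => /(allP A1) /andP [_ Hp']. by move: (leq_trans Hp' Hp); rewrite ltnn.
  rewrite all_cat; apply/andP; split.
    apply/allP => p /(allP A1) /andP [-> Hp] /=; exact: leq_trans Hp H2.
  apply/allP => p /(allP A2) /andP [Hp ->]; rewrite andbT; exact: leq_trans Hp.
Qed.

Lemma linearise_uniq (S : eqType) (r : regex S) : uniq (atoms (linearise r)).
Proof. by have [_ [U _]] := lin_spec r 0. Qed.
Lemma sig_eq A (Q : A -> Prop) (x y : {a | Q a}) : proj1_sig x = proj1_sig y -> x = y.
Proof. case: x => a p; case: y => b q /= E; subst; f_equal; apply: proof_irrelevance. Qed.

Lemma bag_of_bij W I J (f : I -> W) (g : J -> W) (F : I -> J) (G : J -> I) :
  (forall i, G (F i) = i) -> (forall j, F (G j) = j) -> (forall i, g (F i) = f i) ->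
  bag_eq f g.
Proof.
move=> GF FG gF w.
exists (fun x : {i | f i = w} => exist (fun j => g j = w) (F (proj1_sig x))
          (eq_trans (gF _) (proj2_sig x))).
exists (fun y : {j | g j = w} => exist (fun i => f i = w) (G (proj1_sig y))
          (eq_trans (esym (gF (G _))) (eq_trans (f_equal g (FG _)) (proj2_sig y)))).
by split => x; apply: sig_eq => /=.
Qed.

Lemma InE (T : eqType) (a : T) s : List.In a s -> a \in s.
Proof. elim: s => [|b s IH] //= [->|/IH H]; rewrite inE ?eqxx ?H ?orbT //. Qed.

Section Main.
Variables (S : finType) (R : regex S) (D : database S).
Local Notation L := (lang (linearise R)).

Fixpoint transW (prev : option (pos S)) (w : seq (pos S)) : Prop :=
  match w with
  | [::] => True
  | a :: w' => glDelta R prev (bar a) (Some a) /\ transW (Some a) w'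
  end.

Lemma transW_of_lang u w : L (u ++ w) -> transW (last None (map Some u)) w.
Proof.
elim: w u => [|a w IH] u //= H; split.
  case/lastP: u H => [|u z] H /=.
    by split => //; exists w.
  rewrite map_rcons last_rcons; split => //; exists u, w.
  by rewrite -cat_rcons.
have := IH (rcons u a); rewrite map_rcons last_rcons; apply.
by rewrite cat_rcons.
Qed.

Lemma final_of_lang w : L w -> glFinal R (last None (map Some w)).
Proof.
case/lastP: w => [|u a] //= H.
by rewrite map_rcons last_rcons /=; exists u.
Qed.

Lemma transW_reach q w : transW q w -> reach (glDelta R) q (last q (map Some w)).
Proof.
elim: w q => [|a w IH] q /=; first by move=> _; constructor.
by case=> H1 H2; apply: reach_step H1 (IH _ H2).
Qed.

Lemma transW_cat q u v : transW q (u ++ v) -> transW q u.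
Proof. elim: u q => [|a u IH] q //= [H1 H2]; split => //; exact: IH. Qed.

Lemma useful_prefix u v : L (u ++ v) -> gl_useful R (last None (map Some u)).
Proof.
move=> H; split.
  exists None; split => //.
  apply: transW_reach; apply: (@transW_cat _ _ v).
  exact: (@transW_of_lang [::]).
exists (last None (map Some (u ++ v))); split; first exact: final_of_lang.
rewrite map_cat last_cat; apply: transW_reach; exact: transW_of_lang.
Qed.

Lemma useful_None w : L w -> gl_useful R None.
Proof. by move=> H; apply: (@useful_prefix [::] w). Qed.

Lemma useful_in w a : L w -> List.In a w -> gl_useful R (Some a).
Proof.
move=> H /InE Ha; move: H; case/splitPr: Ha => u v H.
have := @useful_prefix (rcons u a) v.
by rewrite map_rcons last_rcons cat_rcons; apply.
Qed.

Definition mkq (d : glQ R) (q : option (pos S)) : glQ R :=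
  match excluded_middle_informative (gl_useful R q) with
  | left p => exist _ q p
  | right _ => d
  end.

Lemma mkqE d q : gl_useful R q -> proj1_sig (mkq d q) = q.
Proof. by rewrite /mkq; case: excluded_middle_informative. Qed.

Lemma mkq_val d q : mkq d (proj1_sig q) = q.
Proof.
rewrite /mkq; case: excluded_middle_informative => [p|n].
  exact: sig_eq.
by case: n; case: q.
Qed.

Definition edge := (dE D * (glQ R * S * glQ R))%type.

Fixpoint mk_es (d : glQ R) (prev : option (pos S)) (l : seq (dE D * pos S)) : seq edge :=
  match l with
  | [::] => [::]
  | (e, a) :: l' => (e, (mkq d prev, bar a, mkq d (Some a))) :: mk_es d (Some a) l'
  end.

Definition fg (x : edge) : option (dE D * pos S) := omap (fun a => (x.1, a)) (proj1_sig x.2.2).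

Lemma map_fst_mk d p l : map fst (mk_es d p l) = map fst l.
Proof. by elim: l p => [|[e a] l IH] p //=; rewrite IH. Qed.

Lemma map_st_mk d p l : map (fun x : edge => x.2.2) (mk_es d p l) = map (fun y => mkq d (Some y.2)) l.
Proof. by elim: l p => [|[e a] l IH] p //=; rewrite IH. Qed.

Lemma map_pair_mk d p l : map (fun x : edge => (x.1, x.2.2)) (mk_es d p l) =
   map (fun y => (y.1, mkq d (Some y.2))) l.
Proof. by elim: l p => [|[e a] l IH] p //=; rewrite IH. Qed.

Lemma pmap_mk d p l : (forall y, List.In y l -> gl_useful R (Some y.2)) ->
  pmap fg (mk_es d p l) = l.
Proof.
elim: l p => [|[e a] l IH] p //= H.
rewrite /fg /= mkqE; last by apply: (H (e, a)); left.
by rewrite IH // => y Hy; apply: H; right.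
Qed.

Lemma mk_pmap d n (q : glQ R) (es : seq edge) :
  is_prod_walk_from D (Gl R) n q es -> mk_es d (proj1_sig q) (pmap fg es) = es.
Proof.
elim: es n q => [|[e [[p a] p']] es IH] n q //=.
case=> Hd [Ha [Hs [Hp Hw]]]; subst p.
have [b [Eb Ea]] : exists b, proj1_sig p' = Some b /\ a = bar b.
  move: Hd => /=; case: (proj1_sig q) => [c|]; case: (proj1_sig p') => [b|] //=;
  by case=> -> _; exists b.
rewrite /fg /= Eb /= Ea -Eb !mkq_val (IH _ _ Hw) //.
Qed.

Lemma prod_inv n (q : glQ R) (es : seq edge) :
  is_prod_walk_from D (Gl R) n q es ->
  [/\ is_walk_from D n (map fst (pmap fg es)),
      (forall y, List.In y (pmap fg es) -> bar y.2 \in lbl y.1),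
      transW (proj1_sig q) (map snd (pmap fg es)) &
      proj1_sig (last q (map (fun x : edge => x.2.2) es)) =
        last (proj1_sig q) (map Some (map snd (pmap fg es)))].
Proof.
elim: es n q => [|[e [[p a] p']] es IH] n q //=.
case=> Hd [Ha [Hs [Hp Hw]]]; subst p.
have [b [Eb Ea]] : exists b, proj1_sig p' = Some b /\ a = bar b.
  move: Hd => /=; case: (proj1_sig q) => [c|]; case: (proj1_sig p') => [b|] //=;
  by case=> -> _; exists b.
rewrite /fg /= Eb /=.
have [H1 H2 H3 H4] := IH _ _ Hw.
rewrite Eb in H3 H4.
split => //.
- by move=> y [<-|/H2] //=; rewrite -Ea.
- by split => //; rewrite -Ea -Eb.
Qed.

Lemma in_lbl_cons e a (l : seq (dE D * pos S)) :
  in_lbl_walk D (e :: map fst l) (bar a :: map bar (map snd l)) <->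
  bar a \in lbl e /\ in_lbl_walk D (map fst l) (map bar (map snd l)).
Proof.
rewrite /in_lbl_walk /=; split.
  case=> [[Hs] H]; split; first by apply: (H 0).
  by split => // i Hi; apply: (H i.+1).
case=> Ha [Hs H]; split; first by rewrite Hs.
case=> [|i] Hi e' a' /=; first by case=> <- [<-].
by apply: H.
Qed.

Lemma in_lbl_iff (l : seq (dE D * pos S)) :
  in_lbl_walk D (map fst l) (map bar (map snd l)) <->
  (forall y, List.In y l -> bar y.2 \in lbl y.1).
Proof.
elim: l => [|[e a] l IH] /=.
  by split => // _; split => // i.
rewrite in_lbl_cons IH; split.
  by case=> H1 H2 y [<-|/H2].
by move=> H; split; [apply: (H (e, a)); left|move=> y Hy; apply: H; right].
Qed.

Lemma prod_walk_mk d l n p : gl_useful R p ->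
  (forall y, List.In y l -> gl_useful R (Some y.2)) ->
  is_walk_from D n (map fst l) ->
  (forall y, List.In y l -> bar y.2 \in lbl y.1) ->
  transW p (map snd l) ->
  is_prod_walk_from D (Gl R) n (mkq d p) (mk_es d p l).
Proof.
elim: l n p => [|[e a] l IH] n p //= Hp Hu [Hs Hw] Hl [Ht Htr].
have Ua : gl_useful R (Some a) by apply: (Hu (e, a)); left.
split; first by rewrite /= !mkqE.
split; first by apply: (Hl (e, a)); left.
split => //; split => //.
apply: IH => //.
- by move=> y Hy; apply: Hu; right.
- by move=> y Hy; apply: Hl; right.
Qed.

Lemma nodup_mk d (l : seq (dE D * pos S)) :
  (forall y, List.In y l -> gl_useful R (Some y.2)) ->
  List.NoDup l -> List.NoDup (map (fun y => (y.1, mkq d (Some y.2))) l).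
Proof.
elim: l => [|y l IH] Hu H /=; first by constructor.
inversion H as [|y' l' Hn Hnd]; subst.
constructor; last by apply: IH => // z Hz; apply: Hu; right.
move/List.in_map_iff => [z [Ez Hz]]; apply: Hn.
have Uy : gl_useful R (Some y.2) by apply: Hu; left.
have Uz : gl_useful R (Some z.2) by apply: Hu; right.
case: Ez => E1 /(f_equal (@proj1_sig _ _)); rewrite !mkqE // => [[E2]].
by move: Hz; clear Uy Uz Hu H IH; case: y z E1 E2 => ? ? [? ?] /= -> ->.
Qed.

Definition Fd (d : glQ R) (t : btrail D) : run D (Gl R) := ((t.1, mkq d None), mk_es d None t.2).

Lemma Fd_ok d t : is_binding_trail D R t ->
  is_run D (Gl R) (Fd d t) /\ bindingtrail_filter D (Gl R) (Fd d t).
Proof.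
case: t => n0 l [Hw [Hl [HL Hnd]]] /=.
have U0 := useful_None HL.
have Ul : forall y, List.In y l -> gl_useful R (Some y.2).
  move=> y Hy; apply: (useful_in HL); exact: List.in_map.
split; last first.
  by rewrite /bindingtrail_filter /= map_pair_mk; apply: nodup_mk.
split; first by rewrite /= mkqE.
split.
  apply: prod_walk_mk => //; first by apply/in_lbl_iff.
  exact: (@transW_of_lang [::]).
rewrite /last_state /= map_st_mk.
have -> : map (fun y : dE D * pos S => mkq d (Some y.2)) l = map (mkq d) (map Some (map snd l)).
  by rewrite -!map_comp.
rewrite last_map mkqE; first exact: final_of_lang.
by apply: (@useful_prefix _ [::]); rewrite cats0.
Qed.

Definition dflt (t : btrail D) (H : is_binding_trail D R t) : glQ R :=
  exist _ None (useful_None (proj1 (proj2 (proj2 H)))).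

Definition Ff (x : {t | is_binding_trail D R t}) :
   {r | is_run D (Gl R) r /\ bindingtrail_filter D (Gl R) r} :=
  exist _ (Fd (dflt (proj2_sig x)) (proj1_sig x)) (Fd_ok _ (proj2_sig x)).

Definition Gd (r : run D (Gl R)) : btrail D := (r.1.1, pmap fg r.2).

Lemma Gd_ok r : is_run D (Gl R) r /\ bindingtrail_filter D (Gl R) r ->
  is_binding_trail D R (Gd r).
Proof.
case: r => [[n0 q0] es] [[Hi [Hw Hf]] Hnd] /=.
have [H1 H2 H3 H4] := prod_inv Hw.
have E := mk_pmap q0 Hw; simpl in E.
rewrite /is_binding_trail /=.
split => //; split; first exact/in_lbl_iff.
split; last first.
  apply: (@List.NoDup_map_inv _ _ (fun y => (y.1, mkq q0 (Some y.2)))).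
  move: Hnd; rewrite /bindingtrail_filter /= -{1}E map_pair_mk; exact.
move: H3 H4 Hf; rewrite /last_state /=; rewrite Hi.
case: (map snd (pmap fg es)) => [|x w] /= Ht Hlast; rewrite Hlast //=.
rewrite last_map /=.
case: Ht => [[_ [u Hu]] Ht] [v Hv].
apply: local_lang; first exact: linearise_uniq.
- by exists u.
- by exists v.
- elim: w x Ht {Hlast Hv Hu} => [|y w IH] x //= [[_ Hxy] Ht]; split; last exact: IH.
  exact: Hxy.
Qed.

Definition Gf (y : {r | is_run D (Gl R) r /\ bindingtrail_filter D (Gl R) r}) :
   {t | is_binding_trail D R t} :=
  exist _ (Gd (proj1_sig y)) (Gd_ok (proj2_sig y)).

Lemma main_bag : bag_eq (BT_sem D R) (run_sem D (Gl R)).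
Proof.
apply: (@bag_of_bij _ _ _ _ _ Ff Gf).
- case=> [[n0 l] H]; apply: sig_eq => /=; rewrite /Gd /Fd /=.
  rewrite pmap_mk //.
  move=> y Hy; apply: (useful_in (proj1 (proj2 (proj2 H)))); exact: List.in_map.
- case=> [[[n0 q0] es] [[Hi [Hw Hf]] Hnd]]; apply: sig_eq => /=; rewrite /Gd /Fd /=.
  have E := mk_pmap (dflt (Gd_ok (conj (conj Hi (conj Hw Hf)) Hnd))) Hw.
  rewrite Hi in E; rewrite E.
  have -> : mkq (dflt (Gd_ok (conj (conj Hi (conj Hw Hf)) Hnd))) None = q0.
    by rewrite -Hi mkq_val.
  by [].
- case=> [[n0 l] H]; rewrite /run_sem /BT_sem /pi_run /pi_bt /=.
  by rewrite map_fst_mk.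
Qed.
End Main.

Theorem lemma28 (S : finType) (R : regex S) (D : database S) :
  bag_eq (BT_sem D R) (run_sem D (Gl R)).
Proof. exact: main_bag. Qed.
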